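(* Assume $\alpha_1\ge0$, $\alpha_2\ge0$, $\alpha_1+\alpha_2>0$, $\beta_1\ge0$, $\beta_2\ge0$, $\lambda>0$, and consider searching on a line with costs $\mathrm{cost}_1(x)=\alpha_1x+\beta_1$, $\mathrm{cost}_2(y)=\alpha_2y+\beta_2$. Write $u=(\alpha_1+\alpha_2)\lambda$, $a=\frac{3\beta_1+2\beta_2}{2u}$ and $b=\frac{\beta_1+\beta_2}{u}$. (i) If $a\le1$, the periodic strategy with distances $$x_i=\Big(\big((1-a)\,i+(1+b)\big)2^i-b\Big)\lambda$$ is optimal and has competitive ratio $5\alpha_1+4\alpha_2$. (ii) If $a\ge1$, let $$\Phi=1+\left(\frac{2\beta_1+\beta_2-u+\sqrt{(2\beta_1+\beta_2)^2-\beta_2^2+(\beta_2+u)^2}}{2u}\right)^{-1}.$$ Then the periodic strategy with distances $x_i=\big((1+b)\Phi^i-b\big)\lambda$ is optimal and has competitive ratio $$\frac{(\alpha_1+\alpha_2)x_1+(\beta_1+\beta_2)+(\alpha_1\lambda+\beta_1)}{\lambda}.$$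
   Context: Searching on a line with general costs. Fix $\lambda>0$. A search strategy is a sequence $\mathcal S(i)=(x_i,r_i)$, $i\ge 1$, with $x_i>0$ and $r_i\in\{\mathrm{left},\mathrm{right}\}$, such that $\sup\{x_i: r_i=\mathrm{left}\}=\sup\{x_i:r_i=\mathrm{right}\}=\infty$. At step $i$ the searcher, starting at the origin, walks distance $x_i$ along ray $r_i$ and, if the target has not been found, walks back to the origin. The target lies on one of the two rays at an unknown distance $D\ge\lambda$ from the origin ($\lambda$ is known to the searcher); it is found at the first step $j$ such that $r_j$ is the target's ray and $x_j\ge D$. Walking distance $x$ away from the origin costs $\mathrm{cost}_1(x)=\alpha_1x+\beta_1$ and walking distance $y$ back towards the origin costs $\mathrm{cost}_2(y)=\alpha_2y+\beta_2$, so the total cost when the target is found at step $j$ is $\sum_{i=1}^{j-1}\big(\mathrm{cost}_1(x_i)+\mathrm{cost}_2(x_i)\big)+\mathrm{cost}_1(D)$. The competitive ratio $CR(\mathcal S)$ is the supremum, over all target positions (either ray, any $D\ge\lambda$), of the total cost divided by $D$. A strategy is optimal if its competitive ratio is minimum among all search strategies. A periodic strategy with distances $x_i$ means $r_1\ne r_2$ and $r_{i+2}=r_i$ for all $i\ge1$. For a periodic strategy with increasing distances the competitive ratio is $\max\Big\{\frac{(\alpha_1+\alpha_2)x_1+\beta_1+\beta_2+\alpha_1\lambda+\beta_1}{\lambda},\ \sup_{n\ge1}\frac{\sum_{i=1}^{n+1}\big((\alpha_1+\alpha_2)x_i+\beta_1+\beta_2\big)+\alpha_1x_n+\beta_1}{x_n}\Big\}$.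 *)

(* Defs.v *)
From Stdlib Require Import Reals Lra.
Open Scope R_scope.

(* A search strategy: step i (i >= 1) walks distance sx i along ray sr i
   (true = right, false = left). Index 0 is unused. *)
Record strategy := mkStrategy { sx : nat -> R; sr : nat -> bool }.

Definition valid_strategy (S : strategy) : Prop :=
  (forall i, (1 <= i)%nat -> 0 < sx S i) /\
  (forall M, exists i, (1 <= i)%nat /\ sr S i = true /\ M < sx S i) /\
  (forall M, exists i, (1 <= i)%nat /\ sr S i = false /\ M < sx S i).

Fixpoint round_costs (a1 b1 a2 b2 : R) (x : nat -> R) (n : nat) : R :=
  match n with
  | O => 0
  | S m => round_costs a1 b1 a2 b2 x m + ((a1 * x (S m) + b1) + (a2 * x (S m) + b2))
  end.

Definition found_at (S : strategy) (side : bool) (D : R) (j : nat) : Prop :=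
  (1 <= j)%nat /\ sr S j = side /\ D <= sx S j /\
  (forall i, (1 <= i)%nat -> (i < j)%nat -> ~ (sr S i = side /\ D <= sx S i)).

Definition total_cost (a1 b1 a2 b2 : R) (S : strategy) (j : nat) (D : R) : R :=
  round_costs a1 b1 a2 b2 (sx S) (Nat.pred j) + (a1 * D + b1).

Definition ratios (a1 b1 a2 b2 lam : R) (S : strategy) (q : R) : Prop :=
  exists side D j, lam <= D /\ found_at S side D j /\
    q = total_cost a1 b1 a2 b2 S j D / D.

Definition has_CR (a1 b1 a2 b2 lam : R) (S : strategy) (c : R) : Prop :=
  is_lub (ratios a1 b1 a2 b2 lam S) c.

(* S is an optimal search strategy: its competitive ratio is minimum
   among all search strategies (strategies with infinite ratio impose nothing). *)
Definition optimal (a1 b1 a2 b2 lam : R) (S : strategy) : Prop :=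
  valid_strategy S /\
  exists c, has_CR a1 b1 a2 b2 lam S c /\
    forall S' c', valid_strategy S' ->
      is_upper_bound (ratios a1 b1 a2 b2 lam S') c' -> c <= c'.

Definition periodic (r : nat -> bool) : Prop :=
  r 1%nat <> r 2%nat /\ forall i, (1 <= i)%nat -> r (i + 2)%nat = r i.

(* Main.v *)
Require Import Defs.
From Stdlib Require Import Reals Lra Psatz Lia Arith Classical IndefiniteDescription.
Open Scope R_scope.

Fixpoint ssum (f : nat -> R) (n : nat) : R :=
  match n with O => 0 | S m => ssum f m + f m end.

Fixpoint mx (r : nat -> bool) (x : nat -> R) (s : bool) (n : nat) : R :=
  match n with
  | O => 0
  | S m => if Bool.eqb (r (S m)) s then Rmax (mx r x s m) (x (S m)) else mx r x s m
  end.

Lemma mx_ge0 r x s n : 0 <= mx r x s n.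
Proof.
  induction n; simpl; [lra|]. destruct (Bool.eqb _ _); [apply Rle_trans with (mx r x s n); [lra|apply Rmax_l]|lra].
Qed.

Lemma mx_step r x s n : mx r x s n <= mx r x s (S n).
Proof. simpl. destruct (Bool.eqb _ _); [apply Rmax_l|lra]. Qed.

Lemma mx_mono r x s p n : (p <= n)%nat -> mx r x s p <= mx r x s n.
Proof.
  intro h. induction h; [lra|]. apply Rle_trans with (mx r x s m); [exact IHh|apply mx_step].
Qed.

Lemma mx_ge r x s i n : (1 <= i)%nat -> (i <= n)%nat -> r i = s -> x i <= mx r x s n.
Proof.
  intros h1 h2 hs. apply Rle_trans with (mx r x s i); [|apply mx_mono; exact h2].
  destruct i; [lia|]. simpl. rewrite hs, Bool.eqb_reflx. apply Rmax_r.
Qed.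

Lemma mx_bound r x s p n M : mx r x s p <= M ->
  (forall i, (p < i)%nat -> (i <= n)%nat -> r i = s -> x i <= M) -> mx r x s n <= M.
Proof.
  intros hp hi. induction n.
  - simpl. pose proof (mx_ge0 r x s p). lra.
  - destruct (le_lt_dec (S n) p) as [h|h].
    + apply Rle_trans with (mx r x s p); [apply mx_mono; exact h|exact hp].
    + assert (IH : mx r x s n <= M) by (apply IHn; intros; apply hi; auto; lia).
      simpl. destruct (Bool.eqb (r (S n)) s) eqn:E; [|exact IH].
      apply Rmax_lub; [exact IH|]. apply hi; [lia|lia|]. apply Bool.eqb_prop; exact E.
Qed.

Lemma mx_attain r x s p n : mx r x s p < mx r x s n ->
  exists w, (p < w)%nat /\ (w <= n)%nat /\ r w = s /\ x w = mx r x s n.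
Proof.
  induction n; intro h.
  - simpl in h. pose proof (mx_ge0 r x s p). lra.
  - destruct (le_lt_dec (S n) p) as [hp|hp].
    + pose proof (mx_mono r x s _ _ hp). lra.
    + simpl in h |- *. destruct (Bool.eqb (r (S n)) s) eqn:E.
      * unfold Rmax in h |- *. destruct (Rle_dec (mx r x s n) (x (S n))).
        -- exists (S n). repeat split; auto. apply Bool.eqb_prop; exact E.
        -- destruct (IHn h) as (w & h1 & h2 & h3 & h4). exists w; repeat split; auto.
      * destruct (IHn h) as (w & h1 & h2 & h3 & h4). exists w; repeat split; auto.
Qed.

Lemma least_ex (P : nat -> Prop) : (exists n, P n) -> exists n, P n /\ forall m, (m < n)%nat -> ~ P m.
Proof.
  intros [n hn]. apply NNPP. intro H.
  assert (forall k, forall m, (m <= k)%nat -> ~ P m).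
  { induction k; intros m hm hPm.
    - assert (m = 0%nat) by lia. subst. apply H. exists 0%nat. split; auto. intros; lia.
    - destruct (Nat.eq_dec m (S k)).
      + subst. apply H. exists (S k). split; auto. intros m' hm'. apply IHk. lia.
      + apply (IHk m); auto. lia. }
  apply (H0 n n); auto.
Qed.

Lemma ssum_nonneg f n : (forall i, 0 <= f i) -> 0 <= ssum f n.
Proof. intro h; induction n; simpl; [lra|]. specialize (h n); lra. Qed.

Lemma ssum_shift f N n : (forall i, 0 <= f i) ->
  ssum (fun i => f (N + i)%nat) n <= ssum f (N + n).
Proof.
  intro h. induction n.
  - simpl. rewrite Nat.add_0_r. apply ssum_nonneg; auto.
  - simpl. rewrite Nat.add_succ_r. simpl. lra.
Qed.

Lemma ssum_scal k f n : ssum (fun i => k * f i) n = k * ssum f n.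
Proof. induction n; simpl; [ring|rewrite IHn; ring]. Qed.

Lemma ssum_ext f g n : (forall i, f i = g i) -> ssum f n = ssum g n.
Proof. intro h; induction n; simpl; [reflexivity|rewrite IHn, h; reflexivity]. Qed.

Lemma limit_le a z Q : (forall D, z < D -> Q <= a * D) -> Q <= a * z.
Proof.
  intro h. destruct (Rle_or_lt Q (a * z)) as [H|H]; [exact H|exfalso].
  destruct (Rle_or_lt a 0) as [ha|ha].
  - specialize (h (z + 1) ltac:(lra)). nra.
  - specialize (h (z + (Q - a * z) / (2 * a))).
    assert (0 < (Q - a * z) / (2 * a)) by (apply Rdiv_lt_0_compat; lra).
    specialize (h ltac:(lra)).
    assert (a * (z + (Q - a * z) / (2 * a)) = a * z + (Q - a * z) / 2) by (field; lra).
    lra.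
Qed.

Lemma K_mono (a1 b1 a2 b2 : R) (x : nat -> R)
  (hcost : forall i, (1 <= i)%nat -> 0 <= (a1 * x i + b1) + (a2 * x i + b2)) p n : (p <= n)%nat -> round_costs a1 b1 a2 b2 x p <= round_costs a1 b1 a2 b2 x n.
Proof.
  intro h; induction h; [lra|]. simpl. specialize (hcost (S m) ltac:(lia)). lra.
Qed.

Lemma K_diff (a1 b1 a2 b2 : R) (x : nat -> R)
  (hcost : forall i, (1 <= i)%nat -> 0 <= (a1 * x i + b1) + (a2 * x i + b2)) p w n : (p < w)%nat -> (w <= n)%nat ->
  (a1 * x w + b1) + (a2 * x w + b2) <= round_costs a1 b1 a2 b2 x n - round_costs a1 b1 a2 b2 x p.
Proof.
  intros h1 h2. destruct w; [lia|].
  assert (round_costs a1 b1 a2 b2 x (S w) <= round_costs a1 b1 a2 b2 x n) by (apply (K_mono a1 b1 a2 b2 x hcost); auto).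
  assert (round_costs a1 b1 a2 b2 x p <= round_costs a1 b1 a2 b2 x w) by (apply (K_mono a1 b1 a2 b2 x hcost); lia).
  simpl in H. lra.
Qed.


Lemma lower_seq a1 a2 b1 b2 lam St c' :
  0 <= a1 -> 0 <= a2 -> 0 < a1 + a2 -> 0 <= b1 -> 0 <= b2 -> 0 < lam ->
  valid_strategy St -> is_upper_bound (ratios a1 b1 a2 b2 lam St) c' ->
  exists Z : nat -> R, (forall k, lam <= Z k) /\
    (a1 + a2) * Z 0%nat + (b1 + b2) + b1 <= (c' - a1) * lam /\
    forall k, ssum (fun i => (a1 + a2) * Z i + (b1 + b2)) (S (S k)) + b1 <= (c' - a1) * Z k.
Proof.
  intros ha1 ha2 ha hb1 hb2 hlam hval hub.
  destruct hval as (hxpos & hT & hF).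
  set (x := sx St) in *. set (r := sr St) in *.
  set (A := a1 + a2). set (B := b1 + b2).
  set (K := round_costs a1 b1 a2 b2 x).
  assert (hcost : forall i, (1 <= i)%nat -> 0 <= (a1 * x i + b1) + (a2 * x i + b2)).
  { intros i hi. specialize (hxpos i hi). nra. }
  assert (hunb : forall s M, exists i, (1 <= i)%nat /\ r i = s /\ M < x i).
  { intros s M; destruct s; [apply hT|apply hF]. }
  set (P := fun tau j => (tau < j)%nat /\ r j = negb (r tau) /\ mx r x (negb (r tau)) tau < x j).
  assert (Hex : forall tau, exists j, P tau j /\ forall m, (m < j)%nat -> ~ P tau m).
  { intro tau. apply least_ex.
    destruct (hunb (negb (r tau)) (mx r x (negb (r tau)) tau)) as (i & hi1 & hi2 & hi3).
    exists i. unfold P. split; [|split; auto].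
    destruct (le_lt_dec i tau) as [h|h]; [|exact h].
    exfalso. pose proof (mx_ge r x _ i tau hi1 h hi2). lra. }
  destruct (functional_choice _ Hex) as [next Hnext].
  set (T := fun k => Nat.iter k next 1%nat).
  assert (HTS : forall k, T (S k) = next (T k)) by reflexivity.
  assert (HT0 : T 0%nat = 1%nat) by reflexivity.
  assert (Hnext_gt : forall tau, (tau < next tau)%nat) by (intro tau; apply (Hnext tau)).
  assert (HTge : forall k, (S k <= T k)%nat).
  { induction k; [rewrite HT0; lia|rewrite HTS; specialize (Hnext_gt (T k)); lia]. }
  assert (Hside : forall k, r (T (S k)) = negb (r (T k))).
  { intro k. rewrite HTS. apply (Hnext (T k)). }
  set (Z := fun k => mx r x (r (T k)) (T (S k))).
  assert (Frec : forall k, mx r x (r (T (S k))) (T (S k) - 1)%nat <= mx r x (r (T (S k))) (T k)).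
  { intro k. apply mx_bound with (p := T k); [lra|]. intros i h1 h2 h3.
    destruct (Rle_or_lt (x i) (mx r x (r (T (S k))) (T k))) as [h|h]; [exact h|exfalso].
    rewrite HTS in h2. apply ((proj2 (Hnext (T k))) i); [lia|].
    unfold P. rewrite Hside in h3, h. repeat split; auto. }
  assert (Fstart : forall k, mx r x (r (T k)) (T k - 1) < x (T k)).
  { intro k. destruct k.
    - rewrite HT0. simpl. apply hxpos; lia.
    - eapply Rle_lt_trans; [apply Frec|]. rewrite Hside. rewrite HTS.
      apply (Hnext (T k)). }
  assert (Fattain : forall k, exists w, (T k <= w)%nat /\ (w <= T (S k) - 1)%nat /\ x w = Z k).
  { intro k.
    assert (hlt : mx r x (r (T k)) (T k - 1) < mx r x (r (T k)) (T (S k))).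
    { eapply Rlt_le_trans; [apply Fstart|]. apply mx_ge; auto.
      - specialize (HTge k); lia.
      - rewrite HTS; specialize (Hnext_gt (T k)); lia. }
    destruct (mx_attain _ _ _ _ _ hlt) as (w & h1 & h2 & h3 & h4).
    exists w. split; [specialize (HTge k); lia|]. split; [|exact h4].
    destruct (Nat.eq_dec w (T (S k))) as [e|e]; [|lia].
    exfalso. rewrite e, Hside in h3. destruct (r (T k)); discriminate. }
  assert (Fsum : forall k, ssum (fun i => A * Z i + B) (S k) <= K (T (S k) - 1)%nat).
  { induction k.
    - destruct (Fattain 0%nat) as (w & h1 & h2 & h3).
      assert (hd := K_diff a1 b1 a2 b2 x hcost 0 w (T 1%nat - 1)%nat ltac:(rewrite HT0 in h1; lia) h2).
      simpl in hd |- *. unfold K, A, B. rewrite <- h3. lra.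
    - destruct (Fattain (S k)) as (w & h1 & h2 & h3).
      assert (hd := K_diff a1 b1 a2 b2 x hcost (T (S k) - 1)%nat w (T (S (S k)) - 1)%nat
                     ltac:(specialize (HTge (S k)); lia) h2).
      change (ssum (fun i => A * Z i + B) (S k) + (A * Z (S k) + B) <= K (T (S (S k)) - 1)%nat).
      unfold K, A, B in *. rewrite <- h3. lra. }
  assert (G : forall tau D, (1 <= tau)%nat -> mx r x (negb (r tau)) tau < D -> lam <= D ->
             K (next tau - 1)%nat + b1 <= (c' - a1) * D).
  { intros tau D htau hD hlD.
    set (s := negb (r tau)). fold s in hD.
    destruct (least_ex (fun j => (1 <= j)%nat /\ r j = s /\ D <= x j)) as (j & (hj1 & hj2 & hj3) & hjmin).
    { destruct (hunb s D) as (i & h1 & h2 & h3). exists i; repeat split; auto; lra. }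
    assert (hfound : found_at St s D j).
    { unfold found_at. repeat split; auto. intros i hi1 hi2 [hh1 hh2]. apply (hjmin i hi2). auto. }
    assert (hq := hub _ (ex_intro _ s (ex_intro _ D (ex_intro _ j (conj hlD (conj hfound eq_refl)))))).
    assert (hgt : (tau < j)%nat).
    { destruct (le_lt_dec j tau) as [h|h]; [|exact h]. exfalso.
      pose proof (mx_ge r x s j tau hj1 h hj2). fold s in hD. lra. }
    assert (hnj : (next tau <= j)%nat).
    { destruct (le_lt_dec (next tau) j) as [h|h]; [exact h|exfalso].
      apply ((proj2 (Hnext tau)) j h). unfold P. split; [lia|split; [exact hj2|]]. fold s. lra. }
    assert (hK : K (next tau - 1)%nat <= K (Nat.pred j)) by (apply (K_mono a1 b1 a2 b2 x hcost); auto; lia).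
    unfold total_cost in hq. fold x K in hq.
    assert (hD0 : 0 < D) by lra.
    apply (Rmult_le_compat_r D) in hq; [|lra].
    unfold Rdiv in hq. rewrite Rmult_assoc, Rinv_l, Rmult_1_r in hq by lra.
    lra. }
  assert (C0 : A * Z 0%nat + B + b1 <= (c' - a1) * lam).
  { assert (h := G 1%nat lam (le_n _)).
    assert (hm : mx r x (negb (r 1%nat)) 1 = 0).
    { simpl. destruct (r 1%nat); reflexivity. }
    rewrite hm in h. specialize (h hlam (Rle_refl _)).
    specialize (Fsum 0%nat). simpl in Fsum. lra. }
  assert (Ck : forall k D, Z k < D -> lam <= D ->
            ssum (fun i => A * Z i + B) (S (S k)) + b1 <= (c' - a1) * D).
  { intros k D h1 h2.
    assert (h := G (T (S k)) D ltac:(specialize (HTge (S k)); lia)).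
    rewrite Hside, Bool.negb_involutive in h. specialize (h h1 h2).
    rewrite <- HTS in h. specialize (Fsum (S k)). lra. }
  assert (Hev : exists N, forall k, (N <= k)%nat -> lam <= Z k).
  { destruct (hunb true lam) as (i1 & h11 & h12 & h13).
    destruct (hunb false lam) as (i2 & h21 & h22 & h23).
    exists (i1 + i2)%nat. intros k hk. unfold Z.
    assert (hTk : (i1 + i2 <= T (S k))%nat) by (specialize (HTge (S k)); lia).
    destruct (r (T k)).
    - apply Rle_trans with (x i1); [lra|]. apply mx_ge; auto; lia.
    - apply Rle_trans with (x i2); [lra|]. apply mx_ge; auto; lia. }
  destruct (least_ex _ Hev) as (N & hN & hNmin).
  assert (hAB : forall i, 0 <= A * Z i + B).
  { intro i. assert (0 <= Z i) by apply mx_ge0. unfold A, B. nra. }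
  exists (fun k => Z (N + k)%nat). split; [intro k; apply hN; lia|]. split.
  - destruct N as [|m].
    + simpl. exact C0.
    + assert (hm : Z m < lam).
      { destruct (Rlt_or_le (Z m) lam) as [h|h]; [exact h|exfalso].
        apply (hNmin m); [lia|]. intros k hk. destruct (Nat.eq_dec k m); [subst; exact h|apply hN; lia]. }
      specialize (Ck m lam hm (Rle_refl _)). simpl in Ck.
      assert (0 <= ssum (fun i => A * Z i + B) m) by (apply ssum_nonneg; auto).
      specialize (hAB m). rewrite Nat.add_0_r. lra.
  - intro k. apply limit_le. intros D hD.
    assert (hl := hN (N + k)%nat ltac:(lia)).
    specialize (Ck (N + k)%nat D hD ltac:(lra)).
    assert (hs := ssum_shift (fun i => A * Z i + B) N (S (S k)) hAB).
    replace (N + S (S k))%nat with (S (S (N + k))) in hs by lia. eapply Rle_trans; [|exact Ck]. apply Rplus_le_compat_r. exact hs.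
Qed.

Lemma ratio_contra (U : nat -> R) (c d : R) :
  (forall n, 0 < U n) -> (forall n, U n < U (S n)) ->
  (forall n, U (S (S n)) <= c * (U (S n) - U n)) -> 0 < d ->
  (forall r, 1 <= r -> r <= U 1%nat / U 0%nat -> d <= r * r - c * r + c) -> False.
Proof.
  intros Hpos Hinc Hrec Hd Hq.
  set (rho := fun n => U (S n) / U n).
  assert (Hr1 : forall n, 1 < rho n).
  { intro n; unfold rho. apply (Rmult_lt_reg_r (U n)); [apply Hpos|].
    unfold Rdiv; rewrite Rmult_assoc, Rinv_l by (apply Rgt_not_eq, Hpos); rewrite Rmult_1_r.
    rewrite Rmult_1_l; apply Hinc. }
  assert (Hstep : forall n, rho (S n) <= c - c / rho n).
  { intro n; unfold rho.
    assert (h0 := Hpos n); assert (h1 := Hpos (S n)); assert (h2 := Hrec n).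
    apply (Rmult_le_reg_r (U (S n))); [lra|].
    replace (U (S (S n)) / U (S n) * U (S n)) with (U (S (S n))) by (field; lra).
    replace ((c - c / (U (S n) / U n)) * U (S n)) with (c * (U (S n) - U n)) by (field; lra).
    exact h2. }
  set (r0 := rho 0%nat).
  assert (Hr0 : 1 < r0) by apply Hr1.
  assert (Hclaim : forall n, rho n <= r0 - INR n * (d / r0)).
  { induction n as [|n IH].
    - simpl; unfold r0; lra.
    - assert (hn := Hr1 n).
      assert (hd0 : 0 < d / r0) by (apply Rdiv_lt_0_compat; lra).
      assert (hle : rho n <= r0).
      { assert (0 <= INR n * (d / r0)) by (apply Rmult_le_pos; [apply pos_INR|lra]). lra. }
      assert (hq := Hq (rho n) (Rlt_le _ _ hn) hle).
      assert (hs := Hstep n).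
      assert (key : c - c / rho n <= rho n - d / r0).
      { assert (e1 : c - c / rho n = rho n - (rho n * rho n - c * rho n + c) / rho n)
          by (field; lra).
        rewrite e1.
        assert (d / r0 <= (rho n * rho n - c * rho n + c) / rho n).
        { apply Rle_trans with (d / rho n).
          - unfold Rdiv; apply Rmult_le_compat_l; [lra|].
            apply Rinv_le_contravar; lra.
          - unfold Rdiv; apply Rmult_le_compat_r; [left; apply Rinv_0_lt_compat; lra|lra]. }
        lra. }
      rewrite S_INR. lra. }
  assert (hd0 : 0 < d / r0) by (apply Rdiv_lt_0_compat; lra).
  destruct (INR_archimed (d / r0) r0 hd0) as [n Hn].
  specialize (Hclaim n); specialize (Hr1 n). lra.
Qed.


Lemma core_seq (v : nat -> R) (b e c : R) :
  0 <= b -> 0 <= e -> (forall k, 0 < v k) ->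
  v 0%nat + b + e <= c ->
  (forall k, ssum (fun i => v i + b) (S (S k)) + e <= c * v k) ->
  let U := fun n => e + c * b + ssum (fun i => v i + b) n in
  0 < c /\ (forall n, U (S (S n)) <= c * (U (S n) - U n)) /\
  (forall n, U n < U (S n)) /\ 0 <= U 0%nat /\ U 1%nat <= c * (1 + b).
Proof.
  intros hb he hv h0 hk U.
  assert (hc : 0 < c) by (specialize (hv 0%nat); lra).
  split; [exact hc|]. split.
  - intro n. unfold U. specialize (hk n). simpl in *. nra.
  - split.
    + intro n; unfold U; simpl. specialize (hv n). lra.
    + unfold U; simpl. split; [nra|lra].
Qed.

Lemma core_i (v : nat -> R) (b e c : R) :
  0 <= b -> 0 <= e -> (forall k, 0 < v k) ->
  v 0%nat + b + e <= c ->
  (forall k, ssum (fun i => v i + b) (S (S k)) + e <= c * v k) -> 4 <= c.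
Proof.
  intros hb he hv h0 hk.
  destruct (core_seq v b e c hb he hv h0 hk) as (hc & hrec & hinc & hU0 & hU1).
  set (U := fun n => e + c * b + ssum (fun i => v i + b) n) in *.
  destruct (Rle_or_lt 4 c) as [h|h]; [exact h|exfalso].
  apply (ratio_contra (fun n => U (S n)) c (c * (4 - c) / 4)).
  - intro n. apply Rle_lt_trans with (U 0%nat); [exact hU0|].
    induction n. apply hinc. apply Rlt_trans with (U (S n)); [exact IHn| apply hinc].
  - intro n; apply hinc.
  - intro n; apply hrec.
  - apply Rdiv_lt_0_compat; [nra|lra].
  - intros r _ _. assert (r * r - c * r + c - c * (4 - c) / 4 = (r - c / 2) * (r - c / 2)) by field. assert (0 <= (r - c / 2) * (r - c / 2)) by apply Rle_0_sqr. lra.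
Qed.

Lemma core_ii (v : nat -> R) (b e c Phi cs : R) :
  0 <= b -> 0 <= e -> (forall k, 0 < v k) ->
  v 0%nat + b + e <= c ->
  (forall k, ssum (fun i => v i + b) (S (S k)) + e <= c * v k) ->
  2 <= e + 2 * b ->
  b * Phi * Phi - (1 + b - e) * Phi - e = 0 ->
  cs = (1 + b) * Phi + e -> 0 < cs -> cs <= c.
Proof.
  intros hb he hv h0 hk hab hE hcs hcs0.
  assert (h4 := core_i v b e c hb he hv h0 hk).
  destruct (core_seq v b e c hb he hv h0 hk) as (hc & hrec & hinc & hU0 & hU1).
  set (U := fun n => e + c * b + ssum (fun i => v i + b) n) in *.
  destruct (Rle_or_lt cs c) as [h|h]; [exact h|exfalso].
  set (w := e + c * b).
  assert (hw : 0 < w) by (unfold w; nra).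
  set (R0 := c * (1 + b) / w).
  assert (hR : 2 * R0 <= c).
  { unfold R0. apply (Rmult_le_reg_r w); [exact hw|].
    replace (2 * (c * (1 + b) / w) * w) with (2 * c * (1 + b)) by (field; lra).
    unfold w. assert (0 <= b * (c - 4)) by (apply Rmult_le_pos; lra). assert (0 <= c * (e + c * b - 2 - 2 * b)) by (apply Rmult_le_pos; lra). nra. }
  set (ws := e + cs * b).
  assert (g1 : cs * (1 + b) = Phi * ws).
  { assert (cs * (1 + b) - Phi * ws = - (1 + b) * (b * Phi * Phi - (1 + b - e) * Phi - e))
      by (unfold ws; rewrite hcs; ring). rewrite hE in H. lra. }
  assert (g2 : cs * (Phi - 1) = Phi * Phi).
  { assert (cs * (Phi - 1) - Phi * Phi = (b * Phi * Phi - (1 + b - e) * Phi - e))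
      by (rewrite hcs; ring). rewrite hE in H. lra. }
  assert (gcs : cs * (1 + b) * (1 + b) - cs * (1 + b) * ws + ws * ws = 0).
  { assert (E1 : (1 + b) * Phi - ws * (Phi - 1) = 0).
    { assert (H : (1 + b) * Phi - ws * (Phi - 1) = (1 + b) * Phi - e * (Phi - 1) - b * (cs * (Phi - 1)))
        by (unfold ws; ring). rewrite g2 in H. rewrite H. lra. }
    rewrite g1.
    replace (Phi * ws * (1 + b) - Phi * ws * ws + ws * ws)
      with (ws * ((1 + b) * Phi - ws * (Phi - 1))) by ring.
    rewrite E1; ring. }
  assert (gc : 0 < c * (1 + b) * (1 + b) - c * (1 + b) * w + w * w).
  { assert (key : (c * (1 + b) * (1 + b) - c * (1 + b) * w + w * w) * cs
                  = (cs - c) * (b * c * cs + e * e)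
                    + c * (cs * (1 + b) * (1 + b) - cs * (1 + b) * ws + ws * ws)).
    { unfold w, ws. ring. }
    rewrite gcs, Rmult_0_r, Rplus_0_r in key.
    assert (0 < (cs - c) * (b * c * cs + e * e)).
    { apply Rmult_lt_0_compat; [lra|].
      destruct (Rle_or_lt b 0) as [hb0|hb0].
      - assert (b = 0) by lra. subst b. nra.
      - assert (0 < b * c * cs) by (apply Rmult_lt_0_compat; [nra|lra]). nra. }
    rewrite <- key in H.
    destruct (Rle_or_lt (c * (1 + b) * (1 + b) - c * (1 + b) * w + w * w) 0); nra. }
  assert (hq : 0 < R0 * R0 - c * R0 + c).
  { assert (R0 * R0 - c * R0 + c
            = c * (c * (1 + b) * (1 + b) - c * (1 + b) * w + w * w) / (w * w))
      by (unfold R0; field; lra).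
    rewrite H. apply Rdiv_lt_0_compat; nra. }
  apply (ratio_contra U c (R0 * R0 - c * R0 + c)).
  - assert (hU0w : U 0%nat = w) by (unfold U, w; simpl; ring).
    intro n. induction n. rewrite hU0w; exact hw. apply Rlt_trans with (U n); [exact IHn|apply hinc].
  - exact hinc.
  - exact hrec.
  - exact hq.
  - intros r hr1 hr2.
    assert (hrR : r <= R0).
    { apply Rle_trans with (U 1%nat / U 0%nat); [exact hr2|].
      unfold R0. replace (U 0%nat) with w by (unfold U, w; simpl; ring).
      unfold Rdiv; apply Rmult_le_compat_r; [left; apply Rinv_0_lt_compat; exact hw| exact hU1]. }
    nra.
Qed.

Lemma bern (p : R) n : 0 <= p -> 1 + INR n * p <= (1 + p) ^ n.
Proof.
  intro hp. induction n.
  - simpl; lra.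
  - rewrite S_INR. simpl.
    assert (0 <= INR n) by apply pos_INR.
    assert (0 <= INR n * p * p) by (apply Rmult_le_pos; [apply Rmult_le_pos|]; lra).
    nra.
Qed.

Lemma periodic_odd r k : periodic r -> r (S (2 * k)) = r 1%nat.
Proof.
  intros [h1 h2]. induction k; [reflexivity|].
  replace (S (2 * S k)) with (S (2 * k) + 2)%nat by lia. rewrite h2 by lia. exact IHk.
Qed.

Lemma periodic_even r k : periodic r -> r (S (S (2 * k))) = r 2%nat.
Proof.
  intros [h1 h2]. induction k; [reflexivity|].
  replace (S (S (2 * S k))) with (S (S (2 * k)) + 2)%nat by lia. rewrite h2 by lia. exact IHk.
Qed.

Lemma H2_gen a1 b1 a2 b2 (x : nat -> R) C :
  round_costs a1 b1 a2 b2 x 2 + b1 = (C - a1) * x 1%nat ->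
  (forall n, (1 <= n)%nat -> (a1 * x (S (S n)) + b1) + (a2 * x (S (S n)) + b2)
                             = (C - a1) * (x (S n) - x n)) ->
  forall n, (1 <= n)%nat -> round_costs a1 b1 a2 b2 x (S n) + b1 = (C - a1) * x n.
Proof.
  intros hb hr n hn. induction hn.
  - exact hb.
  - change (round_costs a1 b1 a2 b2 x (S m) + ((a1 * x (S (S m)) + b1) + (a2 * x (S (S m)) + b2)) + b1
            = (C - a1) * x (S m)).
    rewrite hr by exact hn. lra.
Qed.

Lemma upper_generic a1 a2 b1 b2 lam (x : nat -> R) r C g :
  0 <= a1 -> 0 <= a2 -> 0 <= b1 -> 0 <= b2 -> 0 < lam ->
  periodic r -> 0 < g -> (forall n, (1 + INR n * g) * lam <= x n) ->
  round_costs a1 b1 a2 b2 x 1 + (a1 * lam + b1) = C * lam ->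
  (forall n, (1 <= n)%nat -> round_costs a1 b1 a2 b2 x (S n) + b1 = (C - a1) * x n) ->
  valid_strategy (mkStrategy x r) /\ has_CR a1 b1 a2 b2 lam (mkStrategy x r) C.
Proof.
  intros ha1 ha2 hb1 hb2 hlam hper hg hgrow H1 H2.
  assert (hxpos : forall n, 0 < x n).
  { intro n. specialize (hgrow n). assert (0 <= INR n * g) by (apply Rmult_le_pos; [apply pos_INR|lra]). nra. }
  assert (hx2 : lam <= x 2%nat).
  { specialize (hgrow 2%nat). assert (0 <= INR 2 * g) by (apply Rmult_le_pos; [apply pos_INR|lra]). nra. }
  assert (hunb : forall M, exists N, forall n, (N <= n)%nat -> M < x n).
  { intro M. destruct (INR_archimed (g * lam) M) as [N hN]; [nra|].
    exists N. intros n hn. specialize (hgrow n). apply le_INR in hn.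
    assert (INR N * (g * lam) <= INR n * (g * lam)) by (apply Rmult_le_compat_r; [nra|exact hn]).
    nra. }
  assert (hK1 : 0 <= round_costs a1 b1 a2 b2 x 1).
  { simpl. specialize (hxpos 1%nat). nra. }
  assert (hCa : 0 <= C - a1).
  { assert ((C - a1) * lam = round_costs a1 b1 a2 b2 x 1 + b1) by lra.
    destruct (Rle_or_lt 0 (C - a1)) as [h|h]; [exact h|]. nra. }
  split.
  - unfold valid_strategy; simpl. split; [intros i _; apply hxpos|].
    assert (side : forall s M, exists i, (1 <= i)%nat /\ r i = s /\ M < x i).
    { intros s M. destruct (hunb M) as [N hN]. destruct hper as [hp1 hp2].
      destruct (Bool.bool_dec (r 1%nat) s) as [e|e].
      - exists (S (2 * N)). split; [lia|]. split; [rewrite periodic_odd; auto; split; auto|].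
        apply hN; lia.
      - assert (r 2%nat = s) by (destruct (r 1%nat), (r 2%nat), s; congruence).
        exists (S (S (2 * N))). split; [lia|]. split; [rewrite periodic_even; auto; split; auto|].
        apply hN; lia. }
    split; intro M; apply side.
  - split.
    + intros q (side & D & j & hD & hf & hq). subst q.
      destruct hf as (hj1 & hj2 & hj3 & hj4). simpl in hj2, hj3, hj4.
      unfold total_cost; simpl.
      assert (hD0 : 0 < D) by lra.
      apply (Rmult_le_reg_r D); [exact hD0|].
      unfold Rdiv. rewrite Rmult_assoc, Rinv_l, Rmult_1_r by lra.
      destruct j as [|[|[|n]]]; [lia| | |].
      * simpl. assert ((C - a1) * lam <= (C - a1) * D) by (apply Rmult_le_compat_l; lra). nra.
      * simpl Nat.pred. assert ((C - a1) * lam <= (C - a1) * D) by (apply Rmult_le_compat_l; lra). nra.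
      * simpl Nat.pred.
        assert (hlt : x (S n) < D).
        { destruct (Rlt_or_le (x (S n)) D) as [h|h]; [exact h|exfalso].
          apply (hj4 (S n)); [lia|lia|]. split; [|exact h].
          rewrite <- hj2. destruct hper as [_ hp2].
          replace (S (S (S n))) with (S n + 2)%nat by lia. symmetry; apply hp2; lia. }
        assert (h2 := H2 (S n) ltac:(lia)). simpl in h2 |- *.
        assert ((C - a1) * x (S n) <= (C - a1) * D) by (apply Rmult_le_compat_l; lra). nra.
    + intros M hM. apply hM. exists (r 2%nat), lam, 2%nat. split; [lra|]. split.
      * unfold found_at; simpl. split; [lia|]. split; [reflexivity|]. split; [exact hx2|].
        intros i hi1 hi2 [hh _]. assert (i = 1%nat) by lia. subst i. destruct hper as [hp _]. auto.
      * unfold total_cost; simpl. simpl in H1. rewrite H1. field. lra.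
Qed.

Lemma lower_norm a1 a2 b1 b2 lam St c' :
  0 <= a1 -> 0 <= a2 -> 0 < a1 + a2 -> 0 <= b1 -> 0 <= b2 -> 0 < lam ->
  valid_strategy St -> is_upper_bound (ratios a1 b1 a2 b2 lam St) c' ->
  exists v : nat -> R, (forall k, 0 < v k) /\
    v 0%nat + (b1 + b2) / ((a1 + a2) * lam) + b1 / ((a1 + a2) * lam) <= (c' - a1) / (a1 + a2) /\
    forall k, ssum (fun i => v i + (b1 + b2) / ((a1 + a2) * lam)) (S (S k)) + b1 / ((a1 + a2) * lam)
              <= (c' - a1) / (a1 + a2) * v k.
Proof.
  intros ha1 ha2 ha hb1 hb2 hlam hval hub.
  destruct (lower_seq a1 a2 b1 b2 lam St c' ha1 ha2 ha hb1 hb2 hlam hval hub) as (Z & hZ & h0 & hk).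
  set (u := (a1 + a2) * lam).
  assert (hu : 0 < u) by (unfold u; nra).
  exists (fun k => Z k / lam). split; [intro k; apply Rdiv_lt_0_compat; [specialize (hZ k); lra|lra]|].
  split.
  - apply (Rmult_le_reg_r u); [exact hu|].
    replace ((Z 0%nat / lam + (b1 + b2) / u + b1 / u) * u) with ((a1 + a2) * Z 0%nat + (b1 + b2) + b1)
      by (unfold u; field; lra).
    replace ((c' - a1) / (a1 + a2) * u) with ((c' - a1) * lam) by (unfold u; field; lra).
    exact h0.
  - intro k. specialize (hk k).
    assert (hs : forall n, ssum (fun i => Z i / lam + (b1 + b2) / u) n
                 = / u * ssum (fun i => (a1 + a2) * Z i + (b1 + b2)) n).
    { intro n. rewrite <- ssum_scal. apply ssum_ext. intro i. unfold u. field. lra. }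
    rewrite hs.
    apply (Rmult_le_reg_r u); [exact hu|].
    replace ((/ u * ssum (fun i => (a1 + a2) * Z i + (b1 + b2)) (S (S k)) + b1 / u) * u)
      with (ssum (fun i => (a1 + a2) * Z i + (b1 + b2)) (S (S k)) + b1) by (field; lra).
    replace ((c' - a1) / (a1 + a2) * (Z k / lam) * u) with ((c' - a1) * Z k) by (unfold u; field; lra).
    exact hk.
Qed.

Lemma div_nonneg (p q : R) : 0 <= p -> 0 < q -> 0 <= p / q.
Proof. intros; unfold Rdiv; apply Rmult_le_pos; [lra|left; apply Rinv_0_lt_compat; lra]. Qed.

Theorem theorem5 (a1 a2 b1 b2 lam : R)
  (ha1 : 0 <= a1) (ha2 : 0 <= a2) (ha : 0 < a1 + a2)
  (hb1 : 0 <= b1) (hb2 : 0 <= b2) (hlam : 0 < lam) :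
  let u := (a1 + a2) * lam in
  let a := (3 * b1 + 2 * b2) / (2 * u) in
  let b := (b1 + b2) / u in
  (a <= 1 ->
    forall r : nat -> bool, periodic r ->
      let S := mkStrategy
                 (fun i => (((1 - a) * INR i + (1 + b)) * 2 ^ i - b) * lam) r in
      optimal a1 b1 a2 b2 lam S /\ has_CR a1 b1 a2 b2 lam S (5 * a1 + 4 * a2)) /\
  (1 <= a ->
    let Phi := 1 + / ((2 * b1 + b2 - u
                       + sqrt ((2 * b1 + b2) ^ 2 - b2 ^ 2 + (b2 + u) ^ 2)) / (2 * u)) in
    forall r : nat -> bool, periodic r ->
      let S := mkStrategy (fun i => ((1 + b) * Phi ^ i - b) * lam) r in
      optimal a1 b1 a2 b2 lam S /\
      has_CR a1 b1 a2 b2 lam S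
        (((a1 + a2) * sx S 1%nat + (b1 + b2) + (a1 * lam + b1)) / lam)).
Proof.
  intros u a b.
  assert (hu : 0 < u) by (unfold u; nra).
  assert (hbu : b * u = b1 + b2) by (unfold b; field; lra).
  assert (hau : a * (2 * u) = 3 * b1 + 2 * b2) by (unfold a; field; lra).
  assert (hb : 0 <= b) by (unfold b; apply div_nonneg; lra).
  assert (huu : u = (a1 + a2) * lam) by reflexivity.
  clearbody a b. clearbody u.
  split.
  - intros hale r hper St.
    set (x := fun i => (((1 - a) * INR i + (1 + b)) * 2 ^ i - b) * lam).
    assert (hgrow : forall n, (1 + INR n * 1) * lam <= x n).
    { intro n. unfold x.
      assert (h2 := bern 1 n ltac:(lra)). replace (1 + 1) with 2 in h2 by ring.
      assert (0 <= INR n) by apply pos_INR.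
      assert (0 <= (1 - a) * INR n * 2 ^ n) by (apply Rmult_le_pos; [apply Rmult_le_pos|]; try lra; apply pow_le; lra).
      assert (0 <= b * (2 ^ n - 1)) by (apply Rmult_le_pos; lra).
      apply Rmult_le_compat_r; [lra|]. nra. }
    assert (H1 : round_costs a1 b1 a2 b2 x 1 + (a1 * lam + b1) = (5 * a1 + 4 * a2) * lam).
    { unfold x; simpl. subst u. nra. }
    assert (H2 : forall n, (1 <= n)%nat -> round_costs a1 b1 a2 b2 x (S n) + b1 = (5 * a1 + 4 * a2 - a1) * x n).
    { apply H2_gen.
      - unfold x; simpl. subst u. nra.
      - intros n _. unfold x. rewrite !S_INR. simpl. subst u. nra. }
    destruct (upper_generic a1 a2 b1 b2 lam x r (5 * a1 + 4 * a2) 1 ha1 ha2 hb1 hb2 hlam hper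
                ltac:(lra) hgrow H1 H2) as [hv hcr].
    split; [|exact hcr].
    split; [exact hv|]. exists (5 * a1 + 4 * a2). split; [exact hcr|].
    intros S' c' hv' hub'.
    destruct (lower_norm a1 a2 b1 b2 lam S' c' ha1 ha2 ha hb1 hb2 hlam hv' hub') as (v & hv0 & h0 & hk).
    assert (hAl : 0 < (a1 + a2) * lam) by nra.
    assert (h4 := core_i v ((b1 + b2) / ((a1 + a2) * lam)) (b1 / ((a1 + a2) * lam)) ((c' - a1) / (a1 + a2))
                   ltac:(apply div_nonneg; lra) ltac:(apply div_nonneg; lra) hv0 h0 hk).
    apply (Rmult_le_compat_r (a1 + a2)) in h4; [|lra].
    replace ((c' - a1) / (a1 + a2) * (a1 + a2)) with (c' - a1) in h4 by (field; lra). lra.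
  - intros hage Phi r hper St.
    set (rad := (2 * b1 + b2) ^ 2 - b2 ^ 2 + (b2 + u) ^ 2) in Phi.
    set (sq := sqrt rad) in Phi.
    assert (hrad : 0 <= rad) by (unfold rad; nra).
    assert (hsq : sq * sq = rad) by (unfold sq; apply sqrt_sqrt; exact hrad).
    assert (hsq0 : 0 <= sq) by (unfold sq; apply sqrt_pos).
    assert (hsqge : b2 + u <= sq).
    { assert ((b2 + u) * (b2 + u) <= sq * sq) by (rewrite hsq; unfold rad; nra). nra. }
    assert (hB : 0 < b1 + b2).
    { assert (2 * u <= a * (2 * u)) by nra. lra. }
    set (Tt := (2 * b1 + b2 - u + sq) / (2 * u)) in Phi.
    assert (hTt2 : Tt * (2 * u) = 2 * b1 + b2 - u + sq) by (unfold Tt; field; lra).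
    assert (hTt : 0 < Tt) by nra.
    assert (hquad : u * Tt * Tt + Tt * (u - 2 * b1 - b2) - (b1 + b2) = 0).
    { assert (hs : sq = Tt * (2 * u) - 2 * b1 - b2 + u) by lra.
      rewrite hs in hsq. unfold rad in hsq. nra. }
    set (e := b1 / u).
    assert (heu : e * u = b1) by (unfold e; field; lra).
    assert (he : 0 <= e) by (unfold e; apply div_nonneg; lra).
    clearbody e.
    assert (hnq : Tt * Tt + (1 - e - b) * Tt - b = 0).
    { apply (Rmult_eq_reg_r u); [|lra]. rewrite Rmult_0_l. rewrite <- hquad.
      assert (hb1e' : b1 = e * u) by lra. assert (hb2e' : b2 = b * u - e * u) by lra.
      rewrite hb1e', hb2e'. ring. }
    assert (hPhi : Phi = 1 + / Tt) by reflexivity.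
    clearbody Phi. clear hTt2 hquad hsq hsq0 hsqge hrad. clearbody Tt.
    assert (hE : b * Phi * Phi - (1 + b - e) * Phi - e = 0).
    { rewrite hPhi.
      assert (b * (1 + / Tt) * (1 + / Tt) - (1 + b - e) * (1 + / Tt) - e
              = - (Tt * Tt + (1 - e - b) * Tt - b) / (Tt * Tt)) by (field; lra).
      rewrite H, hnq. field. lra. }
    assert (hPhi1 : 1 < Phi).
    { rewrite hPhi. assert (0 < / Tt) by (apply Rinv_0_lt_compat; lra). lra. }
    set (cs := (1 + b) * Phi + e).
    assert (hcs : 0 < cs) by (unfold cs; nra).
    set (x := fun i => ((1 + b) * Phi ^ i - b) * lam).
    set (C := ((a1 + a2) * x 1%nat + (b1 + b2) + (a1 * lam + b1)) / lam).
    assert (hCl : C * lam = (a1 + a2) * x 1%nat + (b1 + b2) + (a1 * lam + b1)) by (unfold C; field; lra).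
    assert (hC : C - a1 = (a1 + a2) * cs).
    { apply (Rmult_eq_reg_r lam); [|lra].
      replace ((C - a1) * lam) with (C * lam - a1 * lam) by ring. rewrite hCl.
      unfold x, cs. simpl. rewrite <- hbu, <- heu. rewrite huu. ring. }
    assert (hb1e : b1 = e * u) by lra.
    assert (hb2e : b2 = b * u - e * u) by lra.
    assert (hgrow : forall n, (1 + INR n * (Phi - 1)) * lam <= x n).
    { intro n. unfold x.
      assert (h2 := bern (Phi - 1) n ltac:(lra)). replace (1 + (Phi - 1)) with Phi in h2 by ring.
      assert (0 <= INR n * (Phi - 1)) by (apply Rmult_le_pos; [apply pos_INR|lra]).
      assert (0 <= b * (Phi ^ n - 1)) by (apply Rmult_le_pos; lra).
      apply Rmult_le_compat_r; [lra|]. nra. }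
    assert (H1 : round_costs a1 b1 a2 b2 x 1 + (a1 * lam + b1) = C * lam).
    { rewrite hCl. simpl. ring. }
    assert (H2 : forall n, (1 <= n)%nat -> round_costs a1 b1 a2 b2 x (S n) + b1 = (C - a1) * x n).
    { apply H2_gen.
      - rewrite hC. unfold x, cs; simpl. rewrite hb2e, hb1e, huu.
        apply Rminus_diag_uniq.
        transitivity (- (1 + b) * ((a1 + a2) * lam) * (b * Phi * Phi - (1 + b - e) * Phi - e)).
        + ring.
        + rewrite hE; ring.
      - intros n _. rewrite hC. unfold x, cs; simpl. rewrite hb2e, hb1e, huu.
        apply Rminus_diag_uniq.
        transitivity (- (1 + b) * ((a1 + a2) * lam) * Phi ^ n * (b * Phi * Phi - (1 + b - e) * Phi - e)).
        + ring.
        + rewrite hE; ring. }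
    destruct (upper_generic a1 a2 b1 b2 lam x r C (Phi - 1) ha1 ha2 hb1 hb2 hlam hper
                ltac:(lra) hgrow H1 H2) as [hv hcr].
    split; [|exact hcr].
    split; [exact hv|]. exists C. split; [exact hcr|].
    intros S' c' hv' hub'.
    destruct (lower_norm a1 a2 b1 b2 lam S' c' ha1 ha2 ha hb1 hb2 hlam hv' hub') as (v & hv0 & h0 & hk).
    assert (hbeq : (b1 + b2) / ((a1 + a2) * lam) = b) by (rewrite <- huu, <- hbu; field; lra).
    assert (heeq : b1 / ((a1 + a2) * lam) = e) by (rewrite <- huu, <- heu; field; lra).
    rewrite hbeq, heeq in h0. rewrite hbeq, heeq in hk.
    assert (h2b : 2 <= e + 2 * b).
    { assert ((e + 2 * b) * u = a * (2 * u)) by (rewrite hau; lra).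
      assert (2 * u <= a * (2 * u)) by nra. nra. }
    assert (h4 := core_ii v b e ((c' - a1) / (a1 + a2)) Phi cs hb he hv0 h0 hk h2b hE eq_refl hcs).
    apply (Rmult_le_compat_r (a1 + a2)) in h4; [|lra].
    replace ((c' - a1) / (a1 + a2) * (a1 + a2)) with (c' - a1) in h4 by (field; lra). lra.
Qed.
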